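(* Let $\{a_k\}_{k\ge1}$ be a sequence of positive numbers and, for each $N\ge2$, let $T_N$ be the number of i.i.d. draws needed to observe all $N$ types when type $k\in\{1,\dots,N\}$ has probability $a_k/\sum_{i=1}^N a_i$. Then the sequence $\{T_N\}_{N\ge2}$ is stochastically increasing: $P(T_{N+1}\ge k)\ge P(T_N\ge k)$ for all integers $k$ and all $N\ge2$. *)

(* Defs.v *)
From HB Require Import structures.
From mathcomp Require Import all_boot all_order all_algebra.
Set Implicit Arguments. Unset Strict Implicit. Unset Printing Implicit Defensive.
Import Order.TTheory GRing.Theory Num.Theory.
Local Open Scope ring_scope.

(* Type k ∈ {1..N} is represented by i : 'I_N with k = i+1; weights a : nat -> R,
   with a 0 unused. Probability of type i among N types. *)
Definition type_prob (R : realFieldType) (a : nat -> R) (N : nat) (i : 'I_N) : R :=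
  a i.+1 / \sum_(j < N) a j.+1.

(* Probability that the first m i.i.d. draws (an outcome is f : 'I_m -> 'I_N,
   of probability prod_t p(f t)) do NOT contain all N types, i.e. P(T_N > m). *)
Definition not_covered_prob (R : realFieldType) (a : nat -> R) (N m : nat) : R :=
  \sum_(f : {ffun 'I_m -> 'I_N} | ~~ [forall j : 'I_N, j \in codom f])
     \prod_(t < m) type_prob a (f t).

(* P(T_N >= k) = P(T_N > k-1); for k = 0 this is 1 (when N >= 2). *)
Definition coupon_ge (R : realFieldType) (a : nat -> R) (N k : nat) : R :=
  not_covered_prob a N k.-1.

(* Main.v *)
Require Import Defs.
From HB Require Import structures.
From mathcomp Require Import all_boot all_order all_algebra.
From mathcomp Require Import ring.
Import Order.TTheory GRing.Theory Num.Theory.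
Local Open Scope ring_scope.

Section K.
Variables (R : realFieldType) (a : nat -> R).
Hypothesis ha : forall k : nat, (0 < k)%N -> 0 < a k.

Lemma tp_ge0 N (i : 'I_N) : 0 <= type_prob a i.
Proof.
rewrite /type_prob divr_ge0 //; first by rewrite ltW ?ha.
by apply: sumr_ge0 => j _; rewrite ltW ?ha.
Qed.

Lemma tot n m : \sum_(f : {ffun 'I_m -> 'I_n.+1}) \prod_(t < m) type_prob a (f t) = 1.
Proof.
have H1 : \sum_(j < n.+1) type_prob a j = 1.
  rewrite /type_prob -mulr_suml divff //; apply: lt0r_neq0.
  by rewrite big_ord_recl ltr_wpDr ?ha //; apply: sumr_ge0 => j _; rewrite ltW ?ha.
rewrite -(bigA_distr_bigA (fun (t : 'I_m) (j : 'I_n.+1) => type_prob a j)) /=.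
under eq_bigr do rewrite H1. by rewrite big1.
Qed.

Definition surj {n m} (f : {ffun 'I_m -> 'I_n}) := [forall j : 'I_n, j \in codom f].

Lemma notcov_eq n m : not_covered_prob a n.+1 m =
  1 - \sum_(f : {ffun 'I_m -> 'I_n.+1} | surj f) \prod_(t < m) type_prob a (f t).
Proof.
rewrite -{1}(tot n m) (bigID (@surj n.+1 m)) /=. by rewrite [X in _ = X - _]addrC addrK.
Qed.

Definition W {n m} (p : {ffun 'I_m -> 'I_n.+1} * {ffun 'I_m -> 'I_n.+2}) :=
  \prod_(t < m) (type_prob a (p.1 t) * type_prob a (p.2 t)).

Definition phi {n m} (p : {ffun 'I_m -> 'I_n.+1} * {ffun 'I_m -> 'I_n.+2}) :
   {ffun 'I_m -> 'I_n.+1} * {ffun 'I_m -> 'I_n.+2} :=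
  ([ffun t => if p.2 t == ord_max then p.1 t else inord (p.2 t)],
   [ffun t => if p.2 t == ord_max then ord_max else inord (p.1 t)]).

Lemma inord_neq n (i : 'I_n.+1) : @inord n.+1 i != ord_max.
Proof.
apply/eqP => /(congr1 (@nat_of_ord _)); rewrite inordK => [Hi|]; last by apply: (leq_trans (ltn_ord i)).
by move: (ltn_ord i); rewrite Hi ltnn.
Qed.

Lemma val_inord1 n (j : 'I_n.+2) : j != ord_max -> nat_of_ord (@inord n j) = j.
Proof.
move=> H; rewrite inordK //.
have := ltn_ord j; rewrite ltnS leq_eqVlt => /orP [/eqP E|//].
by case/eqP: H; apply: val_inj.
Qed.

Lemma val_inord2 n (i : 'I_n.+1) : nat_of_ord (@inord n.+1 i) = i.
Proof. by rewrite inordK // (leq_trans (ltn_ord i)). Qed.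

Lemma phiK n m : involutive (@phi n m).
Proof.
move=> [u v]; rewrite /phi /=; congr pair; apply/ffunP => t; rewrite !ffunE;
  case: (eqVneq (v t) ord_max) => H; rewrite ?eqxx ?H //.
all: rewrite (negbTE (inord_neq _ (u t))); apply: ord_inj.
- by rewrite val_inord1 ?(inord_neq _ (u t)) // val_inord2.
- by rewrite val_inord2 val_inord1.
Qed.

Lemma W_phi n m p : W (@phi n m p) = W p.
Proof.
rewrite /W /phi /=; apply: eq_bigr => t _; rewrite !ffunE.
case: eqVneq => H; first by rewrite H.
rewrite /type_prob val_inord1 // val_inord2.
ring.
Qed.

Lemma surj_phi n m p : surj p.2 -> surj (@phi n m p).1.
Proof.
move=> /forallP S; apply/forallP => j /=.
have /codomP [t Ht] := S (@inord n.+1 j).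
apply/codomP; exists t; rewrite ffunE -Ht (negbTE (inord_neq _ j)); apply: ord_inj.
by rewrite val_inord1 ?(inord_neq _ j) // val_inord2.
Qed.

Lemma key n m :
  \sum_(v : {ffun 'I_m -> 'I_n.+2} | surj v) \prod_(t < m) type_prob a (v t) <=
  \sum_(u : {ffun 'I_m -> 'I_n.+1} | surj u) \prod_(t < m) type_prob a (u t).
Proof.
have E1 : \sum_(v : {ffun 'I_m -> 'I_n.+2} | surj v) \prod_(t < m) type_prob a (v t)
    = \sum_(p : {ffun 'I_m -> 'I_n.+1} * {ffun 'I_m -> 'I_n.+2} | surj p.2) W p.
  rewrite -[LHS]mulr1 -[X in _ * X = _](tot n m) mulr_suml.
  under eq_bigr do rewrite mulr_sumr.
  rewrite exchange_big pair_big_dep /=.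
  by apply: eq_bigr => p _; rewrite /W [RHS]big_split /= [LHS]mulrC.
have E2 : \sum_(u : {ffun 'I_m -> 'I_n.+1} | surj u) \prod_(t < m) type_prob a (u t)
    = \sum_(p : {ffun 'I_m -> 'I_n.+1} * {ffun 'I_m -> 'I_n.+2} | surj p.1) W p.
  rewrite -[LHS]mulr1 -[X in _ * X = _](tot n.+1 m) mulr_suml.
  under eq_bigr do rewrite mulr_sumr.
  rewrite pair_big_dep /=.
  apply: eq_big => [p|p _]; first by rewrite andbT.
  by rewrite /W [RHS]big_split.
rewrite E1 E2 (reindex_inj (inv_inj (@phiK n m))) /=.
under eq_bigr do rewrite W_phi.
rewrite [X in _ <= X](bigID (fun p => surj (phi p).2)) /=.
have -> : \sum_(p : {ffun 'I_m -> 'I_n.+1} * {ffun 'I_m -> 'I_n.+2} | surj p.1 && surj (phi p).2) W p = \sum_(p : {ffun 'I_m -> 'I_n.+1} * {ffun 'I_m -> 'I_n.+2} | surj (phi p).2) W p.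
  apply: eq_bigl => p; apply/andP/idP => [[]//|H]; split => //.
  by have := @surj_phi n m _ H; rewrite phiK.
rewrite lerDl; apply: sumr_ge0 => p _; apply: prodr_ge0 => t _.
by rewrite mulr_ge0 ?tp_ge0.
Qed.
End K.

Theorem mainTheorem6 (R : realFieldType) (a : nat -> R)
    (ha : forall k : nat, (0 < k)%N -> 0 < a k) :
  forall (N k : nat), (2 <= N)%N -> coupon_ge a N k <= coupon_ge a N.+1 k.
Proof.
move=> [|n] k // _; rewrite /coupon_ge !notcov_eq // lerD2l lerN2.
exact: key.
Qed.
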